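(* Let $q$ be odd and $c\in{\mathbb F}_q$. Then $$\prod\Big\{c-a: a\in{\mathbb F}_q,\ \left(\tfrac{a^2-4}{q}\right)=1\Big\}=\begin{cases}0&\text{if }\left(\frac{c^2-4}{q}\right)=1,\\ \left(\frac{c-2}{q}\right)&\text{if }\left(\frac{c^2-4}{q}\right)=-1,\\ -1/2& c=2,\\ \left(\frac{-1}{q}\right)/2 & c=-2,\end{cases}$$ $$\prod\Big\{c-b: b\in{\mathbb F}_q,\ \left(\tfrac{b^2-4}{q}\right)=-1\Big\}=\begin{cases}\left(\frac{c-2}{q}\right)&\text{if }\left(\frac{c^2-4}{q}\right)=1,\\ 0&\text{if }\left(\frac{c^2-4}{q}\right)=-1,\\ 1/2& c=2,\\ \left(\frac{-1}{q}\right)/2 & c=-2,\end{cases}$$ where an empty product equals $1$.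
   Context: $\left(\frac{a}{q}\right)$ denotes the Legendre symbol on ${\mathbb F}_q$: $1$ if $a$ is a nonzero square, $-1$ if a nonsquare, $0$ if $a=0$. *)

(* Defs.v *)
From HB Require Import structures.
From mathcomp Require Import all_boot all_order all_algebra all_fingroup all_field.
Set Implicit Arguments. Unset Strict Implicit. Unset Printing Implicit Defensive.
Import GRing.Theory.
Local Open Scope ring_scope.

Definition legendre (F : finFieldType) (a : F) : int :=
  if a == 0 then 0 else if [exists b : F, b ^+ 2 == a] then 1 else -1.

(* Main.v *)
Require Import Defs.
From HB Require Import structures.
From mathcomp Require Import all_boot all_order all_algebra all_fingroup all_field ring zify.
Import GRing.Theory.
Local Open Scope ring_scope.

Section S.
Variable F : finFieldType.
Hypothesis Hodd : odd #|F|.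

Lemma cardF0 : (#|F|%:R : F) = 0.
Proof.
have := erefl (\sum_(x : F) x).
rewrite {2}(reindex_inj (addrI 1)) /= big_split /= sumr_const.
move=> h; apply: (addrI (\sum_(x:F) x)); by rewrite addr0 [in RHS]h addrC.
Qed.

Let m := #|F|./2.
Lemma qE : #|F| = (m.*2).+1.
Proof. by rewrite /m -{1}(odd_double_half #|F|) Hodd. Qed.

Lemma m_gt0 : (0 < m)%N.
Proof. have := finNzRing_gt1 F. rewrite qE. by case: m. Qed.

Lemma two_neq0 : (2 : F) != 0.
Proof.
apply/eqP=> h2; have := cardF0; rewrite qE -addn1 natrD -muln2 natrM h2 mulr0 add0r.
by move/eqP; rewrite oner_eq0.
Qed.

Lemma expm2 (x : F) : x != 0 -> x ^+ (m.*2) = 1.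
Proof.
move=> nx; apply: (mulIf nx); rewrite mul1r -exprSr -qE; exact: expf_card.
Qed.

Definition sqs := [pred s : F | (s != 0) && [exists b, b ^+ 2 == s]].

Lemma fiber_le2 (s : F) : leq #|[pred b : F | (b != 0) && (b ^+ 2 == s)]| 2.
Proof.
have nz : ('X^2 - s%:P : {poly F}) != 0 by rewrite -size_poly_eq0 size_XnsubC.
have := max_poly_roots nz _ (enum_uniq [pred b : F | (b != 0) && (b ^+ 2 == s)]).
rewrite size_XnsubC // -cardE; apply.
apply/allP=> b; rewrite mem_enum inE => /andP[_ /eqP <-].
by rewrite rootE !hornerE subrr.
Qed.

Lemma card_sqs : (m <= #|sqs|)%N.
Proof.
have h1 : \sum_(b : F | b != 0) 1%N = m.*2.
  rewrite sum1_card cardC1 qE //.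
rewrite (partition_big (fun b => b ^+ 2) sqs) /= in h1; last first.
  by move=> b nb; rewrite sqrf_eq0 nb /=; apply/existsP; exists b.
rewrite -(leq_double m) -h1 -muln2 -sum_nat_const.
apply: leq_sum => s _; rewrite sum1_card; exact: fiber_le2.
Qed.

Lemma sqs_root (s : F) : sqs s -> s ^+ m = 1.
Proof.
case/andP=> ns /existsP[b /eqP hb]; rewrite -hb -exprM mul2n expm2 //.
by apply: contraNneq ns => b0; rewrite -hb b0 expr0n.
Qed.

Lemma euler (a : F) : (legendre a)%:~R = a ^+ m.
Proof.
rewrite /legendre; case: eqP => [->|/eqP na]; first by rewrite expr0n eqn0Ngt m_gt0.
case: ifP => hex; first by rewrite sqs_root //= na hex.
have /eqP := expm2 a na; rewrite -muln2 exprM sqrf_eq1.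
case/orP=> /eqP h; last by rewrite h.
exfalso.
have nz : ('X^m - 1 : {poly F}) != 0 by rewrite -size_poly_eq0 size_Xn_sub_1 // m_gt0.
have hu : uniq (a :: enum sqs) by rewrite /= enum_uniq mem_enum inE hex andbF.
have := max_poly_roots nz _ hu.
rewrite size_Xn_sub_1 ?m_gt0 //= ltnS -cardE leqNgt ltnS card_sqs => H.
suff: false by []. apply: H; apply/andP; split.
  by rewrite rootE !hornerE h subrr.
apply/allP=> x; by rewrite mem_enum => /sqs_root hx; rewrite rootE !hornerE hx subrr.
Qed.

Lemma prod_eval (p : {poly F}) (S : pred F) (k : F) :
  (forall a, S a -> root p a) -> size p = #|S|.+1 -> p`_#|S| = k ->
  forall c, p.[c] = k * \prod_(a | S a) (c - a).
Proof.
move=> hr hs hk c.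
have h1 : all (root p) (enum S) by apply/allP=> x; rewrite mem_enum => /hr.
have h2 : uniq_roots (enum S) by rewrite uniq_rootsE enum_uniq.
have [Q defp] := uniq_roots_prod_XsubC h1 h2.
set PA := \prod_(z <- enum S) _ in defp.
have sPA : size PA = #|S|.+1 by rewrite size_prod_XsubC -cardE.
have mPA : PA \is monic by apply: monic_prod_XsubC.
have nQ : Q != 0.
  by apply: contra_eq_neq defp => ->; rewrite mul0r -size_poly_eq0 hs.
have sQ : size Q = 1%N.
  move: hs; rewrite defp (size_mul nQ (monic_neq0 mPA)) sPA addnS /=.
  by move=> /eqP; rewrite -add1n eqn_add2r => /eqP.
have qE' : Q = (lead_coef Q)%:P by rewrite [LHS]size1_polyC ?sQ // /lead_coef sQ.
have : lead_coef p = k by rewrite /lead_coef hs.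
rewrite defp lead_coefM (monicP mPA) mulr1 => lQ.
rewrite hornerM qE' lQ hornerC; congr (_ * _).
rewrite /PA horner_prod big_enum; apply: eq_big => // a _; exact: hornerXsubC.
Qed.

Lemma coef_top (b : F) n : (('X - b%:P) ^+ n)`_n = 1.
Proof.
by have := monicP (monic_exp n (monicXsubC b)); rewrite /lead_coef size_exp_XsubC.
Qed.

Lemma coef_high (b : F) n j : (n < j)%N -> (('X - b%:P) ^+ n)`_j = 0.
Proof. by move=> hj; rewrite nth_default // size_exp_XsubC. Qed.

Lemma coef_sub (b : F) n : (('X - b%:P) ^+ n.+1)`_n = - (n.+1%:R * b).
Proof.
elim: n => [|n IH]; first by rewrite expr1 coefB coefX coefC /= mul1r sub0r.
rewrite exprSr mulrBr coefB coefMX /= IH coefMC coef_top mul1r.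
by rewrite [in RHS]mulrSr mulrDl mul1r opprD.
Qed.

Lemma uv_eq (x y : F) : x ^+ m * y ^+ m = 1 -> y ^+ m = x ^+ m.
Proof.
move=> h; have nx : x != 0.
  by apply: contraTneq isT => x0; move: h; rewrite x0 expr0n eqn0Ngt m_gt0 mul0r => /eqP; rewrite eq_sym oner_eq0.
by rewrite -[LHS]mul1r -(expm2 x nx) -muln2 exprM expr2 -mulrA h mulr1.
Qed.

Lemma uv_opp (x y : F) : x ^+ m * y ^+ m = -1 -> y ^+ m = - x ^+ m.
Proof.
move=> h; have nx : x != 0.
  apply: contraTneq isT => x0; move: h; rewrite x0 expr0n eqn0Ngt m_gt0 mul0r => /eqP.
  by rewrite eq_sym oppr_eq0 oner_eq0.
by rewrite -[LHS]mul1r -(expm2 x nx) -muln2 exprM expr2 -mulrA h mulrN1.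
Qed.

Lemma fact4 (a : F) : a ^+ 2 - 4 = (a - 2) * (a - -2).
Proof. ring. Qed.

Lemma leg0 (x : F) : (legendre x == 0) = (x == 0).
Proof. by rewrite /legendre; case: (x == 0) => //=; case: ifP. Qed.

Lemma card_sum (P : pred F) : (\sum_i (P i : nat))%N = #|P|.
Proof. rewrite -sum1_card [RHS]big_mkcond /=; apply: eq_bigr => i _. have -> : (i \in P) = P i by []. by case: (P i). Qed.

Lemma two_neqN2 : (2 : F) != -2.
Proof.
apply/eqP => h; have : (2:F) * 2 = 2 - -2 by ring.
rewrite -h subrr => /eqP; rewrite mulf_eq0 orbb; apply/negP; exact: two_neq0.
Qed.

Lemma partA : addn (addn #|[pred a : F | legendre (a ^+ 2 - 4) == 1]|
               #|[pred a : F | legendre (a ^+ 2 - 4) == -1]|) 2 = #|F|.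
Proof.
have -> : forall n, addn n 2 = addn n #|pred2 (2:F) (-2)|.
  by move=> n; rewrite card2 two_neqN2.
rewrite -!card_sum -big_split -big_split /=.
  apply: eq_bigr => a _.
have : ((a == 2) || (a == -2)) = (legendre (a ^+ 2 - 4) == 0).
  by rewrite leg0 fact4 mulf_eq0 !subr_eq0.
move=> ->; rewrite /legendre; case: (a ^+ 2 - 4 == 0) => //=.
by case: ifP.
Qed.

Lemma m_half : (m%:R : F) * 2 = -1.
Proof.
have := cardF0; rewrite qE -addn1 natrD -muln2 natrM => /eqP.
by rewrite addr_eq0 => /eqP.
Qed.

Definition Gp : {poly F} := ('X - 2%:P) ^+ m - ('X - (-2)%:P) ^+ m.
Definition Hp : {poly F} := ('X - 2%:P) ^+ m + ('X - (-2)%:P) ^+ m.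

Lemma G_coef k : m = k.+1 -> Gp`_k = 2.
Proof.
move=> mk; rewrite /Gp coefB mk !coef_sub -mk mulrN m_half; ring.
Qed.

Lemma G_size : (size Gp <= m)%N.
Proof.
apply/leq_sizeP => j; rewrite leq_eqVlt => /orP[/eqP <-|hj].
  by rewrite /Gp coefB !coef_top subrr.
by rewrite /Gp coefB !coef_high // subrr.
Qed.

Lemma H_coef : Hp`_m = 2.
Proof. by rewrite /Hp coefD !coef_top. Qed.

Lemma H_size : (size Hp <= m.+1)%N.
Proof. by apply/leq_sizeP => j hj; rewrite /Hp coefD !coef_high // addr0. Qed.

Lemma G_root a : legendre (a ^+ 2 - 4) == 1 -> root Gp a.
Proof.
move=> /eqP ha; have := euler (a ^+ 2 - 4); rewrite ha fact4 exprMn => /esym/uv_eq h.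
by rewrite rootE /Gp !hornerE h subrr.
Qed.

Lemma H_root a : legendre (a ^+ 2 - 4) == -1 -> root Hp a.
Proof.
move=> /eqP ha; have := euler (a ^+ 2 - 4); rewrite ha fact4 exprMn => /esym/uv_opp h.
by rewrite rootE /Hp !hornerE h subrr.
Qed.

Lemma sizes : size Gp = #|[pred a : F | legendre (a ^+ 2 - 4) == 1]|.+1 /\
              size Hp = #|[pred a : F | legendre (a ^+ 2 - 4) == -1]|.+1 /\
              #|[pred a : F | legendre (a ^+ 2 - 4) == 1]|.+1 = m /\
              #|[pred a : F | legendre (a ^+ 2 - 4) == -1]| = m.
Proof.
have [k mk] : exists k, m = k.+1 by case: m m_gt0 => // k _; exists k.
have nG : Gp != 0 by apply: contraTneq isT => G0; have := G_coef k mk; rewrite G0 coef0 => /esym/eqP; rewrite (negbTE two_neq0).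
have nH : Hp != 0 by apply: contraTneq isT => H0; have := H_coef; rewrite H0 coef0 => /esym/eqP; rewrite (negbTE two_neq0).
have hA := max_poly_roots nG (rs := enum [pred a : F | legendre (a ^+ 2 - 4) == 1]).
have hB := max_poly_roots nH (rs := enum [pred a : F | legendre (a ^+ 2 - 4) == -1]).
rewrite -cardE in hA hB.
have /hA {}hA : all (root Gp) (enum [pred a : F | legendre (a ^+ 2 - 4) == 1]).
  by apply/allP => x; rewrite mem_enum => /G_root.
have /hB {}hB : all (root Hp) (enum [pred a : F | legendre (a ^+ 2 - 4) == -1]).
  by apply/allP => x; rewrite mem_enum => /H_root.
have {hA} := hA (enum_uniq _). have {hB} := hB (enum_uniq _).
have := G_size; have := H_size; have := partA; rewrite qE mk -cardE.
set x := #|[pred a : F | legendre (a ^+ 2 - 4) == 1]|.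
set y := #|[pred a : F | legendre (a ^+ 2 - 4) == -1]|.
rewrite -muln2; clearbody x y; move: (size Gp) (size Hp) => g h; lia.
Qed.

Lemma prodA c : \prod_(a : F | legendre (a ^+ 2 - 4) == 1) (c - a) =
  ((c - 2) ^+ m - (c - -2) ^+ m) / 2.
Proof.
have [sG [sH [cA cB]]] := sizes.
have [k mk] : exists k, m = k.+1 by case: m m_gt0 => // k _; exists k.
have cA' : #|[pred a : F | legendre (a ^+ 2 - 4) == 1]| = k by apply: succn_inj; rewrite cA.
have := prod_eval Gp [pred a : F | legendre (a ^+ 2 - 4) == 1] 2 G_root sG.
rewrite cA' (G_coef k mk) => /(_ erefl c) h.
by rewrite -[LHS](mulKf two_neq0) -h /Gp !hornerE mulrC.
Qed.

Lemma prodB c : \prod_(a : F | legendre (a ^+ 2 - 4) == -1) (c - a) =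
  ((c - 2) ^+ m + (c - -2) ^+ m) / 2.
Proof.
have [sG [sH [cA cB]]] := sizes.
have := prod_eval Hp [pred a : F | legendre (a ^+ 2 - 4) == -1] 2 H_root sH.
rewrite cB H_coef => /(_ erefl c) h.
by rewrite -[LHS](mulKf two_neq0) -h /Hp !hornerE mulrC.
Qed.

Lemma four_m : (2 - -2 : F) ^+ m = 1.
Proof.
have -> : (2 - -2 : F) = 2 ^+ 2 by ring.
by rewrite -exprM mul2n expm2 // two_neq0.
Qed.

Lemma mN4 : (-2 - 2 : F) ^+ m = (legendre (-1 : F))%:~R.
Proof.
have -> : (-2 - 2 : F) = -1 * (2 - -2) by ring.
by rewrite exprMn four_m mulr1 euler.
Qed.

Lemma zero_m : (0 : F) ^+ m = 0.
Proof. by rewrite expr0n eqn0Ngt m_gt0. Qed.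

Lemma half2 (u : F) : (u + u) / 2 = u.
Proof. have -> : u + u = u * 2 by ring. by rewrite mulfK ?two_neq0. Qed.
End S.

Theorem proposition7p4 (F : finFieldType) (Hodd : odd #|F|) (c : F) :
  (* first product: over a with ((a^2-4)/q) = 1 *)
  ((legendre (c ^+ 2 - 4) = 1 ->
      \prod_(a : F | legendre (a ^+ 2 - 4) == 1) (c - a) = 0) /\
   (legendre (c ^+ 2 - 4) = -1 ->
      \prod_(a : F | legendre (a ^+ 2 - 4) == 1) (c - a) = (legendre (c - 2))%:~R) /\
   (c = 2 ->
      \prod_(a : F | legendre (a ^+ 2 - 4) == 1) (c - a) = - (1 / 2)) /\
   (c = -2 ->
      \prod_(a : F | legendre (a ^+ 2 - 4) == 1) (c - a) = (legendre (-1 : F))%:~R / 2))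
  /\
  (* second product: over b with ((b^2-4)/q) = -1 *)
  ((legendre (c ^+ 2 - 4) = 1 ->
      \prod_(b : F | legendre (b ^+ 2 - 4) == -1) (c - b) = (legendre (c - 2))%:~R) /\
   (legendre (c ^+ 2 - 4) = -1 ->
      \prod_(b : F | legendre (b ^+ 2 - 4) == -1) (c - b) = 0) /\
   (c = 2 ->
      \prod_(b : F | legendre (b ^+ 2 - 4) == -1) (c - b) = 1 / 2) /\
   (c = -2 ->
      \prod_(b : F | legendre (b ^+ 2 - 4) == -1) (c - b) = (legendre (-1 : F))%:~R / 2)).
Proof.
have pA := prodA F Hodd c; have pB := prodB F Hodd c.
have eu := euler F Hodd.
have z0 := zero_m F Hodd; have f4 := four_m F Hodd; have n4 := mN4 F Hodd; have h2 := half2 F Hodd.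
split; (split; [|split; [|split]]).
- by move=> h; rewrite (bigD1 c) ?h //= subrr mul0r.
- move=> h; have := eu (c ^+ 2 - 4); rewrite h fact4 exprMn => /esym/(uv_opp F Hodd) hv.
  rewrite pA hv opprK h2. have e2 := eu (c - 2). by rewrite e2.
- by move=> hc; rewrite pA hc subrr z0 f4 sub0r mulNr div1r.
- by move=> hc; rewrite pA hc n4 subrr z0 subr0.
- move=> h; have := eu (c ^+ 2 - 4); rewrite h fact4 exprMn => /esym/(uv_eq F Hodd) hv.
  rewrite pB hv h2. have e2 := eu (c - 2). by rewrite e2.
- by move=> h; rewrite (bigD1 c) ?h //= subrr mul0r.
- by move=> hc; rewrite pB hc subrr z0 f4 add0r.
- by move=> hc; rewrite pB hc n4 subrr z0 addr0.
Qed.
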